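(* Let $\tau>0$, $\varepsilon\ne0$, $\kappa_{12},\kappa_{34}\in\mathbb R$. The system on $T^*S^3=\{(\gamma,p)\in\mathbb R^8:\langle\gamma,\gamma\rangle=1,\langle\gamma,p\rangle=0\}$ $$\dot\gamma_i=\tfrac{\varepsilon^2}\tau p_i\ (i=1,\dots,4),$$ $$\dot p_1=\tfrac1\tau\kappa_{12}p_2+\mu\gamma_1,\ \dot p_2=-\tfrac1\tau\kappa_{12}p_1+\mu\gamma_2,\ \dot p_3=\tfrac1\tau\kappa_{34}p_4+\mu\gamma_3,\ \dot p_4=-\tfrac1\tau\kappa_{34}p_3+\mu\gamma_4,$$ $$\mu=\frac1\tau\big(\kappa_{12}(p_1\gamma_2-p_2\gamma_1)+\kappa_{34}(p_3\gamma_4-p_4\gamma_3)\big)-\frac{\varepsilon^2}\tau(p_1^2+p_2^2+p_3^2+p_4^2),$$ which is Hamiltonian with Hamiltonian $h=\frac{\varepsilon^2}{2\tau}\sum_{i=1}^4p_i^2$ with respect to the symplectic form $\big(\sum_{i=1}^4dp_i\wedge d\gamma_i+\frac{1}{\varepsilon^2}(\kappa_{12}d\gamma_1\wedge d\gamma_2+\kappa_{34}d\gamma_3\wedge d\gamma_4)\big)|_{T^*S^3}$, is Liouville integrable on $T^*S^3$ with the three first integrals $h$, $\Phi_{12}$, $\Phi_{34}$ in involution, where $$\Phi_{12}=\gamma_1p_2-\gamma_2p_1+\frac{\kappa_{12}}{2\varepsilon^2}(\gamma_1^2+\gamma_2^2),\qquad \Phi_{34}=\gamma_3p_4-\gamm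a_4p_3+\frac{\kappa_{34}}{2\varepsilon^2}(\gamma_3^2+\gamma_4^2).$$
   Context: This is the reduced system of the generalized Demchenko case without twisting in $\mathbb R^4$: a balanced 4-dimensional ball with gyroscope, with modified inertia operator $\tau\,\mathrm{Id}_{so(4)}$, rolling without slipping and twisting over a fixed sphere, with gyroscopic matrix $\kappa=\kappa_{12}\mathbf e_1\wedge\mathbf e_2+\kappa_{34}\mathbf e_3\wedge\mathbf e_4$ and $\varepsilon=b/(b\pm a)$. *)

(* Defs.v *)
From Stdlib Require Import Reals.
From Coquelicot Require Import Coquelicot.
Open Scope R_scope.

(* A point of R^8 = (gamma_1..gamma_4, p_1..p_4); also used for vectors. *)
Record P8 := mkP8 {
  g1 : R; g2 : R; g3 : R; g4 : R;
  q1 : R; q2 : R; q3 : R; q4 : R }.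

Definition pshift (x : P8) (t : R) (v : P8) : P8 :=
  mkP8 (g1 x + t * g1 v) (g2 x + t * g2 v) (g3 x + t * g3 v) (g4 x + t * g4 v)
       (q1 x + t * q1 v) (q2 x + t * q2 v) (q3 x + t * q3 v) (q4 x + t * q4 v).

Definition dist2 (x y : P8) : R :=
  (g1 x - g1 y)^2 + (g2 x - g2 y)^2 + (g3 x - g3 y)^2 + (g4 x - g4 y)^2 +
  (q1 x - q1 y)^2 + (q2 x - q2 y)^2 + (q3 x - q3 y)^2 + (q4 x - q4 y)^2.

Definition zeroP8 : P8 := mkP8 0 0 0 0 0 0 0 0.

Definition inM (x : P8) : Prop :=
  g1 x ^ 2 + g2 x ^ 2 + g3 x ^ 2 + g4 x ^ 2 = 1 /\
  g1 x * q1 x + g2 x * q2 x + g3 x * q3 x + g4 x * q4 x = 0.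

(* tangent space T_x(T^*S^3) inside R^8 (kernel of the differentials of the constraints) *)
Definition tangent (x v : P8) : Prop :=
  g1 x * g1 v + g2 x * g2 v + g3 x * g3 v + g4 x * g4 v = 0 /\
  (g1 x * q1 v + g2 x * q2 v + g3 x * q3 v + g4 x * q4 v) +
  (q1 x * g1 v + q2 x * g2 v + q3 x * g3 v + q4 x * g4 v) = 0.

(* the 2-form  sum_i dp_i /\ dgamma_i + (1/eps^2)(k12 dg1/\dg2 + k34 dg3/\dg4),
   with (a /\ b)(u,v) = a(u) b(v) - a(v) b(u); constant coefficients on R^8 *)
Definition omega (eps k12 k34 : R) (u v : P8) : R :=
  (q1 u * g1 v - q1 v * g1 u) + (q2 u * g2 v - q2 v * g2 u) +
  (q3 u * g3 v - q3 v * g3 u) + (q4 u * g4 v - q4 v * g4 u) +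
  / (eps ^ 2) * (k12 * (g1 u * g2 v - g1 v * g2 u) + k34 * (g3 u * g4 v - g3 v * g4 u)).

Definition dd (f : P8 -> R) (x v : P8) : R :=
  Derive (fun t => f (pshift x t v)) 0.

Definition nondeg (eps k12 k34 : R) (x : P8) : Prop :=
  forall u, tangent x u -> (forall v, tangent x v -> omega eps k12 k34 u v = 0) -> u = zeroP8.

(* X is the Hamiltonian vector of f at x for the restricted form:
   X tangent and  i_X omega = - df  on the tangent space
   (so that gamma' = dH/dp, p' = -dH/dgamma in the canonical case) *)
Definition ham_vec (eps k12 k34 : R) (f : P8 -> R) (x X : P8) : Prop :=
  tangent x X /\ forall v, tangent x v -> omega eps k12 k34 X v = - dd f x v.

(* Poisson bracket {f,g}(x) = omega(X_f, X_g) vanishes on T^*S^3 *)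
Definition in_involution (eps k12 k34 : R) (f g : P8 -> R) : Prop :=
  forall x, inM x -> forall Xf Xg, ham_vec eps k12 k34 f x Xf -> ham_vec eps k12 k34 g x Xg ->
    omega eps k12 k34 Xf Xg = 0.

Definition first_integral (X : P8 -> P8) (F : P8 -> R) : Prop :=
  forall x, inM x -> dd F x (X x) = 0.

Definition indep3 (f g k : P8 -> R) (x : P8) : Prop :=
  forall a b c, (forall v, tangent x v -> a * dd f x v + b * dd g x v + c * dd k x v = 0) ->
    a = 0 /\ b = 0 /\ c = 0.

Definition open_dense_in_M (U : P8 -> Prop) : Prop :=
  (forall x, U x -> inM x) /\
  (forall x, U x -> exists e, 0 < e /\ forall y, inM y -> dist2 x y < e ^ 2 -> U y) /\
  (forall x, inM x -> forall e, 0 < e -> exists y, U y /\ dist2 x y < e ^ 2).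

Definition liouville_integrable (eps k12 k34 : R) (X : P8 -> P8) (f g k : P8 -> R) : Prop :=
  (forall x, inM x -> nondeg eps k12 k34 x) /\
  first_integral X f /\ first_integral X g /\ first_integral X k /\
  in_involution eps k12 k34 f g /\ in_involution eps k12 k34 f k /\
  in_involution eps k12 k34 g k /\
  exists U, open_dense_in_M U /\ forall x, U x -> indep3 f g k x.

Definition mu (tau eps k12 k34 : R) (x : P8) : R :=
  / tau * (k12 * (q1 x * g2 x - q2 x * g1 x) + k34 * (q3 x * g4 x - q4 x * g3 x))
  - eps ^ 2 / tau * (q1 x ^ 2 + q2 x ^ 2 + q3 x ^ 2 + q4 x ^ 2).

Definition sysX (tau eps k12 k34 : R) (x : P8) : P8 :=
  let m := mu tau eps k12 k34 x in
  mkP8 (eps ^ 2 / tau * q1 x) (eps ^ 2 / tau * q2 x)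
       (eps ^ 2 / tau * q3 x) (eps ^ 2 / tau * q4 x)
       (/ tau * k12 * q2 x + m * g1 x) (- (/ tau * k12 * q1 x) + m * g2 x)
       (/ tau * k34 * q4 x + m * g3 x) (- (/ tau * k34 * q3 x) + m * g4 x).

Definition hamH (tau eps : R) (x : P8) : R :=
  eps ^ 2 / (2 * tau) * (q1 x ^ 2 + q2 x ^ 2 + q3 x ^ 2 + q4 x ^ 2).

Definition Phi12 (eps k12 : R) (x : P8) : R :=
  g1 x * q2 x - g2 x * q1 x + k12 / (2 * eps ^ 2) * (g1 x ^ 2 + g2 x ^ 2).

Definition Phi34 (eps k34 : R) (x : P8) : R :=
  g3 x * q4 x - g4 x * q3 x + k34 / (2 * eps ^ 2) * (g3 x ^ 2 + g4 x ^ 2).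

(* Main.v *)
Require Import Defs.
From Stdlib Require Import Reals Lra Psatz.
From Coquelicot Require Import Coquelicot.
Open Scope R_scope.
Ltac pr := cbn [g1 g2 g3 g4 q1 q2 q3 q4] in *.


Lemma dd_h tau eps x v : dd (hamH tau eps) x v =
  eps^2/(2*tau) * (2*(q1 x*q1 v + q2 x*q2 v + q3 x*q3 v + q4 x*q4 v)).
Proof.
  unfold dd. apply is_derive_unique. destruct x, v. unfold hamH, pshift; simpl.
  auto_derive; [trivial|]. ring.
Qed.
Lemma dd_P12 eps k x v : dd (Phi12 eps k) x v =
  g1 v * q2 x + g1 x * q2 v - (g2 v * q1 x + g2 x * q1 v)
  + k/(2*eps^2) * (2*(g1 x * g1 v + g2 x * g2 v)).
Proof.
  unfold dd. apply is_derive_unique. destruct x, v. unfold Phi12, pshift; simpl.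
  auto_derive; [trivial|]. ring.
Qed.
Lemma dd_P34 eps k x v : dd (Phi34 eps k) x v =
  g3 v * q4 x + g3 x * q4 v - (g4 v * q3 x + g4 x * q3 v)
  + k/(2*eps^2) * (2*(g3 x * g3 v + g4 x * g4 v)).
Proof.
  unfold dd. apply is_derive_unique. destruct x, v. unfold Phi34, pshift; simpl.
  auto_derive; [trivial|]. ring.
Qed.

Lemma nondeg_all eps k12 k34 x : inM x -> nondeg eps k12 k34 x.
Proof.
  intros [H1 H2] u Tu Hu. destruct x as [a1 a2 a3 a4 b1 b2 b3 b4].
  destruct u as [c1 c2 c3 c4 d1 d2 d3 d4]. unfold tangent in Tu; cbn [g1 g2 g3 g4 q1 q2 q3 q4] in *.
  destruct Tu as [T1 T2].
  assert (Hg : c1 = 0 /\ c2 = 0 /\ c3 = 0 /\ c4 = 0).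
  { assert (Hv := Hu (mkP8 0 0 0 0 c1 c2 c3 c4)).
    unfold tangent, omega in Hv; cbn [g1 g2 g3 g4 q1 q2 q3 q4] in Hv.
    assert (Hv' : - (c1^2+c2^2+c3^2+c4^2) = 0).
    { rewrite <- Hv by (split; lra). ring. }
    repeat split; nra. }
  destruct Hg as (-> & -> & -> & ->).
  set (z := b1*d1+b2*d2+b3*d3+b4*d4).
  assert (Hv := Hu (mkP8 d1 d2 d3 d4 (-z*a1) (-z*a2) (-z*a3) (-z*a4))).
  unfold tangent, omega in Hv; cbn [g1 g2 g3 g4 q1 q2 q3 q4] in Hv.
  assert (Ht : (a1*d1+a2*d2+a3*d3+a4*d4) = 0) by lra.
  assert (Hv' : d1^2+d2^2+d3^2+d4^2 = 0).
  { rewrite <- Hv. ring. split; [lra|].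
    transitivity (-z * (a1^2+a2^2+a3^2+a4^2) + z); [unfold z; ring|]. rewrite H1; ring. }
  unfold zeroP8; f_equal; nra.
Qed.

Lemma ham_sys tau eps k12 k34 x : 0 < tau -> eps <> 0 -> inM x ->
  ham_vec eps k12 k34 (hamH tau eps) x (sysX tau eps k12 k34 x).
Proof.
  intros Ht He [H1 H2]. destruct x as [a1 a2 a3 a4 b1 b2 b3 b4].
  unfold ham_vec, tangent, sysX, mu; pr. split.
  - split.
    + transitivity (eps^2/tau * (a1 * b1 + a2 * b2 + a3 * b3 + a4 * b4)); [field; lra|].
      rewrite H2; ring.
    + set (m := / tau * (k12 * (b1 * a2 - b2 * a1) + k34 * (b3 * a4 - b4 * a3)) -
        eps ^ 2 / tau * (b1 ^ 2 + b2 ^ 2 + b3 ^ 2 + b4 ^ 2)).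
      transitivity (m * (a1 ^ 2 + a2 ^ 2 + a3 ^ 2 + a4 ^ 2) - m); [unfold m; field; lra|].
      rewrite H1; ring.
  - intros v [T1 T2]. rewrite dd_h. destruct v as [c1 c2 c3 c4 d1 d2 d3 d4].
    unfold omega; pr.
    set (m := / tau * (k12 * (b1 * a2 - b2 * a1) + k34 * (b3 * a4 - b4 * a3)) -
        eps ^ 2 / tau * (b1 ^ 2 + b2 ^ 2 + b3 ^ 2 + b4 ^ 2)).
    transitivity (m * (a1 * c1 + a2 * c2 + a3 * c3 + a4 * c4) -
       eps ^ 2 / (2 * tau) * (2 * (b1 * d1 + b2 * d2 + b3 * d3 + b4 * d4)));
      [field; lra|]. rewrite T1; ring.
Qed.

Lemma fi_h tau eps k12 k34 : 0 < tau -> eps <> 0 ->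
  first_integral (sysX tau eps k12 k34) (hamH tau eps).
Proof.
  intros Ht He x [H1 H2]. rewrite dd_h. destruct x as [a1 a2 a3 a4 b1 b2 b3 b4].
  unfold sysX, mu; pr.
  set (m := / tau * (k12 * (b1 * a2 - b2 * a1) + k34 * (b3 * a4 - b4 * a3)) -
        eps ^ 2 / tau * (b1 ^ 2 + b2 ^ 2 + b3 ^ 2 + b4 ^ 2)).
  transitivity (eps^2/tau * m * (a1 * b1 + a2 * b2 + a3 * b3 + a4 * b4)); [field; lra|].
  rewrite H2; ring.
Qed.

Lemma fi_12 tau eps k12 k34 : 0 < tau -> eps <> 0 ->
  first_integral (sysX tau eps k12 k34) (Phi12 eps k12).
Proof.
  intros Ht He x [H1 H2]. rewrite dd_P12. destruct x as [a1 a2 a3 a4 b1 b2 b3 b4].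
  unfold sysX, mu; pr. field. lra.
Qed.

Lemma fi_34 tau eps k12 k34 : 0 < tau -> eps <> 0 ->
  first_integral (sysX tau eps k12 k34) (Phi34 eps k34).
Proof.
  intros Ht He x [H1 H2]. rewrite dd_P34. destruct x as [a1 a2 a3 a4 b1 b2 b3 b4].
  unfold sysX, mu; pr. field. lra.
Qed.

Definition Y12 (x : P8) : P8 := mkP8 (- g2 x) (g1 x) 0 0 (- q2 x) (q1 x) 0 0.

Lemma ham_Y12 eps k12 k34 x : eps <> 0 -> ham_vec eps k12 k34 (Phi12 eps k12) x (Y12 x).
Proof.
  intros He. destruct x as [a1 a2 a3 a4 b1 b2 b3 b4]. unfold ham_vec, tangent, Y12; pr.
  split; [split; ring|].
  intros v _. rewrite dd_P12. destruct v. unfold omega; pr. field. auto.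
Qed.

Lemma omega_anti eps k12 k34 u v : omega eps k12 k34 u v = - omega eps k12 k34 v u.
Proof. unfold omega; ring. Qed.

Lemma invol_gen eps k12 k34 f g (Z : P8 -> P8) :
  (forall x, inM x -> ham_vec eps k12 k34 f x (Z x)) ->
  (forall x, inM x -> dd g x (Z x) = 0) ->
  in_involution eps k12 k34 f g.
Proof.
  intros HZ Hg x Hx Xf Xg [Tf Hf] [Tg Hgv].
  destruct (HZ x Hx) as [TZ HZx].
  rewrite (Hf Xg Tg), <- (HZx Xg Tg), omega_anti, (Hgv _ TZ), Hg; auto; ring.
Qed.

Definition uu (x : P8) := g1 x * q1 x + g2 x * q2 x.

Lemma indep_U tau eps k12 k34 x : 0 < tau -> eps <> 0 -> inM x -> uu x <> 0 ->
  indep3 (hamH tau eps) (Phi12 eps k12) (Phi34 eps k34) x.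
Proof.
  intros Ht He [H1 H2] Hu a b c H.
  destruct x as [a1 a2 a3 a4 b1 b2 b3 b4]. unfold uu in Hu; pr.
  set (r := a1^2+a2^2). set (s := a3^2+a4^2).
  assert (Hr : 0 < r).
  { unfold r. destruct (Req_dec a1 0); destruct (Req_dec a2 0); try nra. }
  assert (Hs : 0 < s).
  { unfold s. destruct (Req_dec a3 0); destruct (Req_dec a4 0); try nra. }
  assert (E1 := H (mkP8 0 0 0 0 (s*a1) (s*a2) (-r*a3) (-r*a4))).
  assert (E2 := H (mkP8 0 0 0 0 (-a2) a1 0 0)).
  assert (E3 := H (mkP8 0 0 0 0 0 0 (-a4) a3)).
  rewrite !dd_h, !dd_P12, !dd_P34 in E1, E2, E3. unfold tangent in *; pr.
  assert (Ha : a = 0).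
  { assert (E1' : a * (eps^2/tau) * (s * (a1*b1+a2*b2) - r*(a3*b3+a4*b4)) = 0).
    { rewrite <- E1. field. lra. unfold r, s. split; ring. }
    replace (s * (a1*b1+a2*b2) - r*(a3*b3+a4*b4)) with (a1*b1+a2*b2) in E1'.
    2:{ replace (a3*b3+a4*b4) with (-(a1*b1+a2*b2)) by lra.
        replace s with (1 - r) by (unfold r, s; lra). ring. }
    assert (0 < eps^2) by (apply pow2_gt_0; auto).
    assert (0 < eps^2/tau) by (apply Rdiv_lt_0_compat; auto).
    destruct (Rmult_integral _ _ E1') as [E|E]; [|contradiction].
    destruct (Rmult_integral _ _ E) as [E'|E']; [auto|lra]. }
  subst a.
  assert (Hb : b * r = 0).
  { rewrite <- E2. unfold r; field. lra. split; ring. }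
  assert (Hc : c * s = 0).
  { rewrite <- E3. unfold s; field. lra. split; ring. }
  split; [auto|]. split; nra.
Qed.

Lemma sq6 x1 x2 x3 x4 x5 x6 :
  (x1+x2+x3+x4+x5+x6)^2 <= 6*(x1^2+x2^2+x3^2+x4^2+x5^2+x6^2).
Proof.
  assert (0 <= (x1-x2)^2+(x1-x3)^2+(x1-x4)^2+(x1-x5)^2+(x1-x6)^2+(x2-x3)^2+(x2-x4)^2
   +(x2-x5)^2+(x2-x6)^2+(x3-x4)^2+(x3-x5)^2+(x3-x6)^2+(x4-x5)^2+(x4-x6)^2+(x5-x6)^2)
   by (repeat apply Rplus_le_le_0_compat; apply pow2_ge_0).
  nra.
Qed.

Lemma U_open x : uu x <> 0 ->
  exists e, 0 < e /\ forall y, inM y -> dist2 x y < e ^ 2 -> inM y /\ uu y <> 0.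
Proof.
  intros Hu. destruct x as [a1 a2 a3 a4 b1 b2 b3 b4]. unfold uu in *; pr.
  set (u := a1*b1+a2*b2) in *.
  set (K := a1^2+a2^2+b1^2+b2^2).
  assert (HK : 0 <= K) by (unfold K; nra).
  set (d := Rabs u).
  assert (Hd : 0 < d) by (apply Rabs_pos_lt; auto).
  assert (Hd2 : d^2 = u^2) by (apply pow2_abs).
  set (e := d / (3*(K+1) + 3*d)).
  assert (He : 0 < e) by (unfold e; apply Rdiv_lt_0_compat; lra).
  assert (He1 : e * (3*(K+1) + 3*d) = d) by (unfold e; field; lra).
  exists e; split; auto.
  intros y Hy Hdist; split; auto.
  destruct y as [c1 c2 c3 c4 d1 d2 d3 d4]; pr. unfold dist2 in Hdist; pr.
  unfold uu; pr; intro Hz.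
  set (x1 := c1 - a1) in *. set (x2 := c2 - a2) in *.
  set (y1 := d1 - b1) in *. set (y2 := d2 - b2) in *.
  assert (P1 := pow2_ge_0 (a1-c1)). assert (P2 := pow2_ge_0 (a2-c2)).
  assert (P3 := pow2_ge_0 (a3-c3)). assert (P4 := pow2_ge_0 (a4-c4)).
  assert (P5 := pow2_ge_0 (b1-d1)). assert (P6 := pow2_ge_0 (b2-d2)).
  assert (P7 := pow2_ge_0 (b3-d3)). assert (P8 := pow2_ge_0 (b4-d4)).
  assert (Hx1 : x1^2 <= e^2) by (unfold x1; nra).
  assert (Hx2 : x2^2 <= e^2) by (unfold x2; nra).
  assert (Hy1 : y1^2 <= e^2) by (unfold y1; nra).
  assert (Hy2 : y2^2 <= e^2) by (unfold y2; nra).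
  assert (Eu : u = - (a1*y1 + x1*b1 + x1*y1 + a2*y2 + x2*b2 + x2*y2)).
  { assert (u - (- (a1*y1 + x1*b1 + x1*y1 + a2*y2 + x2*b2 + x2*y2)) = c1*d1+c2*d2)
      by (unfold u, x1, x2, y1, y2; ring). lra. }
  assert (B := sq6 (a1*y1) (x1*b1) (x1*y1) (a2*y2) (x2*b2) (x2*y2)).
  assert (Hu2 : u^2 <= 6*(e^2*K + 2*e^2*e^2)).
  { replace (u^2) with ((a1*y1 + x1*b1 + x1*y1 + a2*y2 + x2*b2 + x2*y2)^2)
      by (rewrite Eu; ring).
    eapply Rle_trans; [exact B|]. apply Rmult_le_compat_l; [lra|].
    unfold K.
    assert (a1^2*y1^2 <= a1^2*e^2) by (apply Rmult_le_compat_l; nra).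
    assert (a2^2*y2^2 <= a2^2*e^2) by (apply Rmult_le_compat_l; nra).
    assert (b1^2*x1^2 <= b1^2*e^2) by (apply Rmult_le_compat_l; nra).
    assert (b2^2*x2^2 <= b2^2*e^2) by (apply Rmult_le_compat_l; nra).
    assert (x1^2*y1^2 <= e^2*e^2) by (apply Rmult_le_compat; nra).
    assert (x2^2*y2^2 <= e^2*e^2) by (apply Rmult_le_compat; nra).
    nra. }
  assert (He3 : 3*e <= 1/(K+1) * d) by (apply (Rmult_le_reg_r (K+1)); [lra|]; field_simplify; nra).
  assert (e < 1/3) by nra.
  assert (2*e^2 < 1) by nra.
  assert (Q : 0 <= 3*e*(K+1) <= d) by nra.
  assert (9*e^2*(K+1)^2 <= d^2).
  { replace (9*e^2*(K+1)^2) with ((3*e*(K+1))^2) by ring.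
    apply pow_incr; lra. }
  assert (6*e^2*(K+1) < d^2).
  { assert (6*e^2*(K+1) * (K+1) <= 6*e^2*(K+1)^2) by nra.
    assert (6*e^2*(K+1) <= 6*e^2*(K+1)^2) by nra. nra. }
  assert (u^2 <= 6*e^2*(K+1)) by nra.
  nra.
Qed.

Lemma dist_tri x y z : dist2 x z <= 2 * dist2 x y + 2 * dist2 y z.
Proof.
  assert (L : forall a b c, (a - c)^2 <= 2*(a-b)^2 + 2*(b-c)^2).
  { intros. assert (0 <= (a - 2*b + c)^2) by apply pow2_ge_0. nra. }
  unfold dist2.
  pose proof (L (g1 x) (g1 y) (g1 z)). pose proof (L (g2 x) (g2 y) (g2 z)).
  pose proof (L (g3 x) (g3 y) (g3 z)). pose proof (L (g4 x) (g4 y) (g4 z)).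
  pose proof (L (q1 x) (q1 y) (q1 z)). pose proof (L (q2 x) (q2 y) (q2 z)).
  pose proof (L (q3 x) (q3 y) (q3 z)). pose proof (L (q4 x) (q4 y) (q4 z)).
  lra.
Qed.

Lemma caseB x e : inM x -> 0 < g1 x ^2 + g2 x ^2 -> 0 < g3 x ^2 + g4 x^2 -> 0 < e ->
  exists y, inM y /\ uu y <> 0 /\ dist2 x y < e^2.
Proof.
  intros [H1 H2] Hr Hs He.
  destruct (Req_dec (uu x) 0) as [Hu|Hu].
  2:{ exists x. split; [split; auto|]. split; auto. destruct x; unfold dist2; pr. nra. }
  destruct x as [a1 a2 a3 a4 b1 b2 b3 b4]. unfold uu in Hu; pr.
  set (r := a1^2+a2^2) in *. set (s := a3^2+a4^2) in *.
  set (W := (s*a1)^2 + (s*a2)^2 + (r*a3)^2 + (r*a4)^2).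
  assert (HW : 0 <= W) by (unfold W; nra).
  set (t := e / (1 + W)).
  assert (Ht : 0 < t) by (unfold t; apply Rdiv_lt_0_compat; lra).
  exists (mkP8 a1 a2 a3 a4 (b1 + t*(s*a1)) (b2 + t*(s*a2)) (b3 - t*(r*a3)) (b4 - t*(r*a4))).
  unfold inM, uu, dist2; pr. split; [split|split].
  - auto.
  - transitivity (a1 * b1 + a2 * b2 + a3 * b3 + a4 * b4 + t*(s*r - r*s)); [unfold r, s; ring|].
    rewrite H2; ring.
  - replace (a1 * (b1 + t * (s * a1)) + a2 * (b2 + t * (s * a2))) with
      (a1 * b1 + a2 * b2 + t * s * r) by (unfold r; ring).
    rewrite Hu. assert (0 < t*s*r) by (apply Rmult_lt_0_compat; [apply Rmult_lt_0_compat|]; auto).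
    lra.
  - replace ((a1 - a1) ^ 2 + (a2 - a2) ^ 2 + (a3 - a3) ^ 2 + (a4 - a4) ^ 2 +
      (b1 - (b1 + t * (s * a1))) ^ 2 + (b2 - (b2 + t * (s * a2))) ^ 2 +
      (b3 - (b3 - t * (r * a3))) ^ 2 + (b4 - (b4 - t * (r * a4))) ^ 2) with (t^2 * W)
      by (unfold W; ring).
    unfold t. replace ((e / (1 + W)) ^ 2 * W) with (e^2 * (W / (1+W)^2)) by (field; lra).
    assert (W / (1+W)^2 < 1).
    { apply (Rmult_lt_reg_r ((1+W)^2)). nra. field_simplify; nra. }
    assert (0 < e^2) by nra. nra.
Qed.

Lemma param t : 0 < t <= 1/2 ->
  let a := 2*t/(1+t^2) in let c := (1-t^2)/(1+t^2) in
  a^2 + c^2 = 1 /\ 0 < a /\ 0 < c /\ a^2 <= 4*t^2 /\ (1-c)^2 <= t^2 /\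
  (a/c)^2 <= 8*t^2.
Proof.
  intros Ht a c.
  assert (P : 0 < 1 + t^2) by nra.
  assert (Ha : 0 < a) by (unfold a; apply Rdiv_lt_0_compat; lra).
  assert (Hc : 0 < c) by (unfold c; apply Rdiv_lt_0_compat; nra).
  split; [unfold a, c; field; lra|]. split; auto. split; auto.
  split; [|split].
  - unfold a. replace ((2*t/(1+t^2))^2) with (4*t^2 / (1+t^2)^2) by (field; lra).
    apply (Rmult_le_reg_r ((1+t^2)^2)); [nra|]. field_simplify; nra.
  - unfold c. replace ((1 - (1-t^2)/(1+t^2))^2) with (4*t^4 / (1+t^2)^2) by (field; lra).
    apply (Rmult_le_reg_r ((1+t^2)^2)); [nra|]. field_simplify; [|lra]. assert (0 <= t^2*(t^2-1)^2) by (apply Rmult_le_pos; nra). nra.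
  - unfold a, c. replace ((2 * t / (1 + t ^ 2) / ((1 - t ^ 2) / (1 + t ^ 2)))^2)
      with (4*t^2 / (1-t^2)^2) by (field; nra).
    apply (Rmult_le_reg_r ((1-t^2)^2)); [nra|]. field_simplify; [|nra]. assert (t^2 <= 1/4) by nra. assert (Q: 9/16 <= (1-t^2)^2) by nra. replace (8 * t ^ 6 - 16 * t ^ 4 + 8 * t ^ 2) with (8*t^2*(1-t^2)^2) by ring. assert (0 <= t^2) by nra. nra.
Qed.

Lemma caseC x e : inM x -> g1 x ^2 + g2 x ^2 = 0 -> 0 < e ->
  exists y, inM y /\ 0 < g1 y ^2 + g2 y ^2 /\ 0 < g3 y ^2 + g4 y^2 /\ dist2 x y < e^2.
Proof.
  intros [H1 H2] Hr He.
  destruct x as [a1 a2 a3 a4 b1 b2 b3 b4]. pr.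
  assert (a1 = 0) by nra. assert (a2 = 0) by nra. subst a1 a2.
  assert (S1 : a3^2 + a4^2 = 1) by nra.
  assert (S2 : a3*b3 + a4*b4 = 0) by nra.
  set (L := 5 + 8*b1^2).
  set (t := e / (4*(L+e))).
  assert (HL : 5 <= L) by (unfold L; nra).
  assert (Ht : 0 < t) by (unfold t; apply Rdiv_lt_0_compat; lra).
  assert (Ht2 : t <= 1/2).
  { unfold t. apply (Rmult_le_reg_r (4*(L+e))); [lra|]. field_simplify; lra. }
  assert (Ht3 : t * (4*(L+e)) = e) by (unfold t; field; lra).
  destruct (param t (conj Ht Ht2)) as (E1 & Ha & Hc & B1 & B2 & B3).
  set (a := 2*t/(1+t^2)) in *. set (c := (1-t^2)/(1+t^2)) in *.
  set (d := - (a/c) * b1).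
  exists (mkP8 a 0 (c*a3) (c*a4) b1 b2 (b3 + d*a3) (b4 + d*a4)).
  unfold inM, dist2; pr. split; [split|split; [|split]].
  - transitivity (a^2 + c^2 * (a3^2+a4^2)); [ring|]. rewrite S1; lra.
  - transitivity (a*b1 + c*(a3*b3+a4*b4) + c*d*(a3^2+a4^2)); [ring|].
    rewrite S1, S2. unfold d. field. lra.
  - nra.
  - replace ((c*a3)^2+(c*a4)^2) with (c^2 * (a3^2+a4^2)) by ring. rewrite S1; nra.
  - match goal with |- ?G < _ => replace G with
      (a^2 + (1-c)^2 * (a3^2+a4^2) + (a/c)^2*b1^2 * (a3^2+a4^2)) by (unfold d; ring) end.
    rewrite S1.
    assert ((a/c)^2*b1^2 <= 8*t^2*b1^2) by (apply Rmult_le_compat_r; nra).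
    assert (t^2 * L < e^2).
    { assert (4*t*L <= e) by nra.
      assert (t^2*L <= t * e / 4) by nra.
      assert (t < e) by nra. nra. }
    unfold L in *. nra.
Qed.

Lemma caseD x e : inM x -> g3 x ^2 + g4 x ^2 = 0 -> 0 < e ->
  exists y, inM y /\ 0 < g1 y ^2 + g2 y ^2 /\ 0 < g3 y ^2 + g4 y^2 /\ dist2 x y < e^2.
Proof.
  intros [H1 H2] Hr He.
  destruct x as [a1 a2 a3 a4 b1 b2 b3 b4]. pr.
  assert (a3 = 0) by nra. assert (a4 = 0) by nra. subst a3 a4.
  assert (S1 : a1^2 + a2^2 = 1) by nra.
  assert (S2 : a1*b1 + a2*b2 = 0) by nra.
  set (L := 5 + 8*b3^2).
  set (t := e / (4*(L+e))).
  assert (HL : 5 <= L) by (unfold L; nra).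
  assert (Ht : 0 < t) by (unfold t; apply Rdiv_lt_0_compat; lra).
  assert (Ht2 : t <= 1/2).
  { unfold t. apply (Rmult_le_reg_r (4*(L+e))); [lra|]. field_simplify; lra. }
  assert (Ht3 : t * (4*(L+e)) = e) by (unfold t; field; lra).
  destruct (param t (conj Ht Ht2)) as (E1 & Ha & Hc & B1 & B2 & B3).
  set (a := 2*t/(1+t^2)) in *. set (c := (1-t^2)/(1+t^2)) in *.
  set (d := - (a/c) * b3).
  exists (mkP8 (c*a1) (c*a2) a 0 (b1 + d*a1) (b2 + d*a2) b3 b4).
  unfold inM, dist2; pr. split; [split|split; [|split]].
  - transitivity (a^2 + c^2 * (a1^2+a2^2)); [ring|]. rewrite S1; lra.
  - transitivity (a*b3 + c*(a1*b1+a2*b2) + c*d*(a1^2+a2^2)); [ring|].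
    rewrite S1, S2. unfold d. field. lra.
  - replace ((c*a1)^2+(c*a2)^2) with (c^2 * (a1^2+a2^2)) by ring. rewrite S1; nra.
  - nra.
  - match goal with |- ?G < _ => replace G with
      (a^2 + (1-c)^2 * (a1^2+a2^2) + (a/c)^2*b3^2 * (a1^2+a2^2)) by (unfold d; ring) end.
    rewrite S1.
    assert ((a/c)^2*b3^2 <= 8*t^2*b3^2) by (apply Rmult_le_compat_r; nra).
    assert (t^2 * L < e^2).
    { assert (4*t*L <= e) by nra.
      assert (t^2*L <= t * e / 4) by nra.
      assert (t < e) by nra. nra. }
    unfold L in *. nra.
Qed.

Lemma dense_U x : inM x -> forall e, 0 < e ->
  exists y, (inM y /\ uu y <> 0) /\ dist2 x y < e ^ 2.
Proof.
  intros Hx e He.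
  assert (Hcomb : forall y, inM y -> 0 < g1 y ^2 + g2 y ^2 -> 0 < g3 y ^2 + g4 y^2 ->
     dist2 x y < (e/2)^2 -> exists z, (inM z /\ uu z <> 0) /\ dist2 x z < e ^ 2).
  { intros y Hy Hr Hs Hd. destruct (caseB y (e/2) Hy Hr Hs) as (z & Hz & Hu & Hd2); [lra|].
    exists z. split; [split; auto|]. pose proof (dist_tri x y z). nra. }
  assert (Hr0 : 0 <= g1 x ^2 + g2 x ^2) by nra.
  assert (Hs0 : 0 <= g3 x ^2 + g4 x ^2) by nra.
  destruct (Rle_lt_or_eq_dec _ _ Hr0) as [Hr|Hr].
  - destruct (Rle_lt_or_eq_dec _ _ Hs0) as [Hs|Hs].
    + destruct (caseB x e Hx Hr Hs He) as (z & Hz & Hu & Hd). exists z; auto.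
    + destruct (caseD x (e/2) Hx (eq_sym Hs)) as (y & Hy & H1 & H2 & H3); [lra|].
      eauto.
  - destruct (caseC x (e/2) Hx (eq_sym Hr)) as (y & Hy & H1 & H2 & H3); [lra|].
    eauto.
Qed.

Theorem theorem9p5 (tau eps k12 k34 : R) :
  0 < tau -> eps <> 0 ->
  (* the system is Hamiltonian with Hamiltonian h w.r.t. the restricted form *)
  (forall x, inM x -> ham_vec eps k12 k34 (hamH tau eps) x (sysX tau eps k12 k34 x)) /\
  (* and Liouville integrable with first integrals h, Phi12, Phi34 *)
  liouville_integrable eps k12 k34 (sysX tau eps k12 k34)
    (hamH tau eps) (Phi12 eps k12) (Phi34 eps k34).
Proof.
  intros Ht He.
  split; [intros; apply ham_sys; auto|].
  split; [intros; apply nondeg_all; auto|].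
  split; [apply fi_h; auto|]. split; [apply fi_12; auto|]. split; [apply fi_34; auto|].
  split; [apply (invol_gen _ _ _ _ _ (sysX tau eps k12 k34));
          [intros; apply ham_sys; auto | apply fi_12; auto]|].
  split; [apply (invol_gen _ _ _ _ _ (sysX tau eps k12 k34));
          [intros; apply ham_sys; auto | apply fi_34; auto]|].
  split; [apply (invol_gen _ _ _ _ _ Y12);
          [intros; apply ham_Y12; auto | intros x _; rewrite dd_P34; unfold Y12; pr; ring]|].
  exists (fun x => inM x /\ uu x <> 0). split.
  - split; [intros x [H _]; exact H|]. split.
    + intros x [Hx Hu]. exact (U_open x Hu).
    + exact dense_U.
  - intros x [Hx Hu]. apply indep_U; auto.
Qed.
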